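(* Let $\mathbf{A} \in \mathbb{R}^{L \times N}$, $\mathbf{L}_2 \in \mathbb{R}^{M_2 \times N}$ and $\lambda_2 > 0$. Assume: (i) $\mathbf{A}$ has full row rank, so that $\mathbf{A}\mathbf{A}^T$ is invertible; (ii) $\ker \mathbf{A} \cap \ker \mathbf{L}_2 = \{\mathbf{0}\}$; (iii) $\ker(\mathbf{A})^\perp$ is an invariant subspace of $\mathbf{L}_2^T\mathbf{L}_2$, i.e. $\mathbf{x} \in \ker(\mathbf{A})^\perp \Rightarrow \mathbf{L}_2^T\mathbf{L}_2\mathbf{x} \in \ker(\mathbf{A})^\perp$. Let $\mathbf{\Lambda}_2 = (\mathbf{A}\mathbf{A}^T)^{-1}\mathbf{A}\mathbf{L}_2^T\mathbf{L}_2\mathbf{A}^T$. Then $$(\mathbf{A}^T\mathbf{A} + \lambda_2\mathbf{L}_2^T\mathbf{L}_2)^{-1}\mathbf{A}^T = \mathbf{A}^T(\mathbf{A}\mathbf{A}^T + \lambda_2\mathbf{\Lambda}_2)^{-1},$$ where both inverses appearing in this identity exist.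
   Context: $\ker(\mathbf{A})^\perp$ denotes the orthogonal complement of the nullspace of $\mathbf{A}$ in $\mathbb{R}^N$. *)

(* Defs.v *)
From mathcomp Require Import all_boot all_order all_algebra.
From mathcomp Require Import reals.
Set Implicit Arguments. Unset Strict Implicit. Unset Printing Implicit Defensive.
Import Order.TTheory GRing.Theory Num.Theory.
Local Open Scope ring_scope.

Definition in_ker (R : realType) (L N : nat) (A : 'M[R]_(L, N)) (x : 'cV[R]_N) : Prop :=
  A *m x = 0.

Definition dotv (R : realType) (N : nat) (x y : 'cV[R]_N) : R :=
  \sum_(i < N) x i 0 * y i 0.

Definition in_ker_perp (R : realType) (L N : nat) (A : 'M[R]_(L, N)) (x : 'cV[R]_N) : Prop :=
  forall y : 'cV[R]_N, in_ker A y -> dotv y x = 0.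

(* Main.v *)
Require Import Defs.
From mathcomp Require Import all_boot all_order all_algebra.
From mathcomp Require Import reals.
Import Order.TTheory GRing.Theory Num.Theory.
Local Open Scope ring_scope.

Section Aux.
Context {R : realType}.

Lemma sq_ge0 {n} (x : 'cV[R]_n) : 0 <= (x^T *m x) 0 0.
Proof. rewrite mxE; apply: sumr_ge0 => i _; rewrite mxE; by rewrite -expr2 sqr_ge0. Qed.

Lemma sq_eq0 {n} (x : 'cV[R]_n) : (x^T *m x) 0 0 = 0 -> x = 0.
Proof.
rewrite mxE => /eqP; rewrite psumr_eq0; last by move=> i _; rewrite mxE -expr2 sqr_ge0.
move=> /allP H; apply/matrixP => i j; rewrite ord1 !mxE.
have := H i (mem_index_enum i); rewrite mxE /= => /eqP.
by move/eqP; rewrite mulf_eq0 orbb => /eqP.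
Qed.

Lemma dotvE n (x y : 'cV[R]_n) : dotv x y = (x^T *m y) 0 0.
Proof. by rewrite /dotv mxE; apply: eq_bigr => i _; rewrite mxE. Qed.

Lemma unit_of_inj n (B : 'M[R]_n) : (forall x : 'cV_n, B *m x = 0 -> x = 0) -> B \in unitmx.
Proof.
move=> H; rewrite unitmxE unitfE -det_tr; apply/negP => /det0P [v vn0 hv].
have : B *m v^T = 0 by rewrite -[B]trmxK -trmx_mul hv trmx0.
move/H => /(congr1 trmx); rewrite trmxK trmx0 => hv0.
by move/eqP: vn0.
Qed.

Lemma mat_eq_cols m n (B C : 'M[R]_(m, n)) :
  (forall j, B *m delta_mx j (0 : 'I_1) = C *m delta_mx j (0 : 'I_1)) -> B = C.
Proof.
move=> H; apply/matrixP => i j.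
have := congr1 (fun M : 'M_(m,1) => M i 0) (H j); by rewrite -!colE !mxE.
Qed.

End Aux.

Theorem lemma1 (R : realType) (L N M2 : nat)
  (A : 'M[R]_(L, N)) (L2 : 'M[R]_(M2, N)) (lambda2 : R)
  (hlam : 0 < lambda2)
  (hrank : \rank A = L)
  (hker : forall x : 'cV[R]_N, in_ker A x -> in_ker L2 x -> x = 0)
  (hinv : forall x : 'cV[R]_N, in_ker_perp A x ->
            in_ker_perp A ((L2^T *m L2) *m x)) :
  let Lambda2 := invmx (A *m A^T) *m A *m L2^T *m L2 *m A^T in
  [/\ (A^T *m A + lambda2 *: (L2^T *m L2)) \in unitmx,
      (A *m A^T + lambda2 *: Lambda2) \in unitmx &
      invmx (A^T *m A + lambda2 *: (L2^T *m L2)) *m A^T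
        = A^T *m invmx (A *m A^T + lambda2 *: Lambda2)].
Proof.
move=> Lam.
have rfA : row_free A by rewrite /row_free hrank.
have AT0 : forall y : 'cV[R]_L, A^T *m y = 0 -> y = 0.
  move=> y hy; have : y^T *m A = 0 *m A by rewrite mul0mx -[A]trmxK -trmx_mul hy trmx0.
  by move/(row_free_inj rfA) => /(congr1 trmx); rewrite trmxK trmx0.
set K := A *m A^T.
have Ku : K \in unitmx.
  apply: unit_of_inj => y hy; apply: AT0; apply: sq_eq0.
  by rewrite trmx_mul trmxK -mulmxA (mulmxA A) -/K hy mulmx0 mxE.
set P := L2^T *m L2.
set G := A^T *m A + lambda2 *: P.
have Ginj : forall x : 'cV[R]_N, G *m x = 0 -> x = 0.
  move=> x hx.
  have e : x^T *m G *m x = (A *m x)^T *m (A *m x) + lambda2 *: ((L2 *m x)^T *m (L2 *m x)).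
    by rewrite /G /P !trmx_mul mulmxDr mulmxDl -scalemxAr -scalemxAl !mulmxA.
  have h0 : (x^T *m G *m x) 0 0 = 0 by rewrite -mulmxA hx mulmx0 mxE.
  have s1 := sq_ge0 (A *m x); have s2 := sq_ge0 (L2 *m x).
  set a := ((A *m x)^T *m (A *m x)) 0 0 in s1 *; set b := ((L2 *m x)^T *m (L2 *m x)) 0 0 in s2 *.
  have h : a + lambda2 * b = 0.
    by rewrite -h0 e /a /b !mxE.
  have hc : 0 <= lambda2 * b by rewrite mulr_ge0 // ltW.
  have ha : a = 0.
    apply/eqP; rewrite eq_le s1 andbT -h; by rewrite lerDl.
  have hb : b = 0.
    move: h; rewrite ha add0r => /eqP; rewrite mulf_eq0 (negbTE (lt0r_neq0 hlam)) /=.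
    by move/eqP.
  by apply: hker; apply: sq_eq0.
have Gu : G \in unitmx by apply: unit_of_inj.
have PAT : P *m A^T = A^T *m Lam.
  apply: mat_eq_cols => j; set v := delta_mx j (0 : 'I_1).
  have hu : in_ker_perp A (A^T *m v).
    by move=> y hy; rewrite dotvE mulmxA -trmx_mul hy trmx0 mul0mx mxE.
  have hw := hinv _ hu; rewrite -/P in hw.
  set w := P *m (A^T *m v) in hw.
  set t := invmx K *m (A *m w).
  set z := w - A^T *m t.
  have Az : A *m z = 0.
    by rewrite /z mulmxBr (mulmxA A A^T) -/K /t (mulmxA K) mulmxV // mul1mx subrr.
  have z0 : z = 0.
    apply: sq_eq0.
    have h1 := hw z Az; rewrite dotvE in h1.
    have h2 : (z^T *m (A^T *m t)) 0 0 = 0 by rewrite mulmxA -trmx_mul Az trmx0 mul0mx mxE.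
    have : (z^T *m z) = z^T *m w - z^T *m (A^T *m t) by rewrite {2}/z mulmxBr.
    by move=> ->; rewrite mxE [X in _ + X]mxE h1 h2 subrr.
  have hwt : P *m (A^T *m v) = A^T *m t by apply/eqP; rewrite -subr_eq0 -/z z0.
  rewrite -mulmxA hwt /t /Lam /K /P.
  by rewrite !mulmxA.
set M := A *m A^T + lambda2 *: Lam.
have GAT : G *m A^T = A^T *m M.
  by rewrite /G /M mulmxDl mulmxDr -scalemxAl -scalemxAr PAT !mulmxA.
have Mu : M \in unitmx.
  apply: unit_of_inj => y hy; apply: AT0; apply: Ginj.
  by rewrite mulmxA GAT -mulmxA hy mulmx0.
split => //.
by rewrite -[LHS](mulmxK Mu) -(mulmxA (invmx G)) -GAT mulmxA mulVmx // mul1mx.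
Qed.
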